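(* Let $k \geq 1$ and $\Sigma = \{a_0, a_1, \ldots, a_{k-1}\}$. Consider the context-free grammar $G$ with terminal symbols $\Sigma \cup \{\epsilon, +, *, (, )\}$, start symbol $S$, non-terminals $S, E, E_i, Y, Y', Y_i, Y_i', Z, Z_i, P_i, P_i'$ (for $0 \le i < k$), and productions \begin{itemize} \item $S \to Y \mid Z$; \item $E \to Y \mid (Z) \mid (\epsilon + Y') \mid (\epsilon + Z)$; \item $E_i \to Y_i \mid (Z_i) \mid (\epsilon + Y_i') \mid (\epsilon + Z_i)$ for $0 \le i < k$; \item $Y \to P_i$ for each $0 \le i < k$; \item $Y' \to P_i'$ for each $0 \le i < k$; \item $Y_i \to P_j$ for all $0 \le i, j < k$ with $i \neq j$; \item $Y_i' \to P_j'$ for all $0 \le i, j < k$ with $i \neq j$; \item $Z \to P_{n_0}' + P_{n_1}' + \cdots + P_{n_t}'$ for all $t > 0$ and all $0 \le n_0 < n_1 < \cdots < n_t < k$; \item $Z_i \to P_{n_0}' + P_{n_1}' + \cdots + P_{n_t}'$ for all $t > 0$ and all $0 \le n_0 < n_1 < \cdots < n_t < k$ with $n_j \neq i$ for all $0 \le j \le t$; \item $P_i \to a_i \mid a_i E \mid a_i a_j * \mid a_i a_j * E_j$ for all $0 \le i, j < k$; \item $P_i' \to a_i \mid a_i E \mid a_i a_j * \mid a_i a_j * E_j$ for all $0 \le i, j < k$ with $i \neq j$. \end{itemize} Then $G$ is unambiguous, and any two distinct strings generated by $G$ (from $S$), read as regular expressions, denote distinct regular languages.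
   Context: Strings generated by the grammar are interpreted as regular expressions over $\Sigma$ in the usual way: $\epsilon$ denotes the empty word, $+$ is union, juxtaposition is concatenation, $*$ is Kleene star (applied here to the single preceding symbol $a_j$), with the standard precedence (star over concatenation over union) and parentheses for grouping. A context-free grammar is unambiguous if every string it generates has exactly one parse tree. *)

(* Defs.v *)
From mathcomp Require Import all_boot.
Set Implicit Arguments. Unset Strict Implicit. Unset Printing Implicit Defensive.

(** Terminal symbols: a_i (i : nat, only i < k are used), epsilon, +, *, (, ). *)
Inductive tok : Type := TA of nat | TEps | TPlus | TStar | TL | TR.

Inductive nt : Type :=
  | NS | NE | NEi of nat | NY | NY' | NYi of nat | NYi' of nat
  | NZ | NZi of nat | NP of nat | NP' of nat.

Inductive sym : Type := T of tok | N of nt.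

Fixpoint sep_plus (s : seq sym) : seq sym :=
  match s with
  | [::] => [::]
  | [:: x] => [:: x]
  | x :: s' => x :: T TPlus :: sep_plus s'
  end.

Inductive prodP (i : nat) (k : nat) : seq sym -> Prop :=
  | PP1 : prodP i k [:: T (TA i)]
  | PP2 : prodP i k [:: T (TA i); N NE]
  | PP3 j : j < k -> prodP i k [:: T (TA i); T (TA j); T TStar]
  | PP4 j : j < k -> prodP i k [:: T (TA i); T (TA j); T TStar; N (NEi j)].

Inductive prod (k : nat) : nt -> seq sym -> Prop :=
  | pS1 : prod k NS [:: N NY]
  | pS2 : prod k NS [:: N NZ]
  | pE1 : prod k NE [:: N NY]
  | pE2 : prod k NE [:: T TL; N NZ; T TR]
  | pE3 : prod k NE [:: T TL; T TEps; T TPlus; N NY'; T TR]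
  | pE4 : prod k NE [:: T TL; T TEps; T TPlus; N NZ; T TR]
  | pEi1 i : i < k -> prod k (NEi i) [:: N (NYi i)]
  | pEi2 i : i < k -> prod k (NEi i) [:: T TL; N (NZi i); T TR]
  | pEi3 i : i < k -> prod k (NEi i) [:: T TL; T TEps; T TPlus; N (NYi' i); T TR]
  | pEi4 i : i < k -> prod k (NEi i) [:: T TL; T TEps; T TPlus; N (NZi i); T TR]
  | pY i : i < k -> prod k NY [:: N (NP i)]
  | pY' i : i < k -> prod k NY' [:: N (NP' i)]
  | pYi i j : i < k -> j < k -> i != j -> prod k (NYi i) [:: N (NP j)]
  | pYi' i j : i < k -> j < k -> i != j -> prod k (NYi' i) [:: N (NP' j)]
  | pZ (ns : seq nat) : 2 <= size ns -> sorted ltn ns -> all (fun n => n < k) ns ->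
      prod k NZ (sep_plus (map (fun n => N (NP' n)) ns))
  | pZi i (ns : seq nat) : i < k -> 2 <= size ns -> sorted ltn ns ->
      all (fun n => n < k) ns -> i \notin ns ->
      prod k (NZi i) (sep_plus (map (fun n => N (NP' n)) ns))
  | pP i rhs : i < k -> prodP i k rhs -> prod k (NP i) rhs
  | pP' i j rhs : i < k -> j < k -> i != j ->
      (rhs = [:: T (TA i)] \/ rhs = [:: T (TA i); N NE] \/
       rhs = [:: T (TA i); T (TA j); T TStar] \/
       rhs = [:: T (TA i); T (TA j); T TStar; N (NEi j)]) ->
      prod k (NP' i) rhs.

Inductive ptree : Type := Leaf of tok | Node of nt & seq ptree.

Definition root (t : ptree) : sym :=
  match t with Leaf a => T a | Node A _ => N A end.

Fixpoint valid (k : nat) (t : ptree) : Prop :=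
  match t with
  | Leaf _ => True
  | Node A ts =>
      prod k A (map root ts) /\
      (fix validl (ts : seq ptree) : Prop :=
         match ts with [::] => True | t :: ts' => valid k t /\ validl ts' end) ts
  end.

Fixpoint yield (t : ptree) : seq tok :=
  match t with
  | Leaf a => [:: a]
  | Node _ ts =>
      (fix yieldl (ts : seq ptree) : seq tok :=
         match ts with [::] => [::] | t :: ts' => yield t ++ yieldl ts' end) ts
  end.

Definition parse_tree (k : nat) (t : ptree) (s : seq tok) : Prop :=
  valid k t /\ root t = N NS /\ yield t = s.

Definition generated (k : nat) (s : seq tok) : Prop := exists t, parse_tree k t s.

Definition unambiguous (k : nat) : Prop :=
  forall s, generated k s -> forall t1 t2, parse_tree k t1 s -> parse_tree k t2 s -> t1 = t2.

(** Regular expressions over Sigma = {a_0,...,a_{k-1}} and their languages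
    (words are sequences of letter indices). *)
Inductive regex : Type :=
  | REps | RSym of nat | RUnion of regex & regex | RCat of regex & regex | RStar of regex.

Inductive rmem : regex -> seq nat -> Prop :=
  | mEps : rmem REps [::]
  | mSym i : rmem (RSym i) [:: i]
  | mUl r1 r2 w : rmem r1 w -> rmem (RUnion r1 r2) w
  | mUr r1 r2 w : rmem r2 w -> rmem (RUnion r1 r2) w
  | mCat r1 r2 w1 w2 : rmem r1 w1 -> rmem r2 w2 -> rmem (RCat r1 r2) (w1 ++ w2)
  | mStar0 r : rmem (RStar r) [::]
  | mStarS r w1 w2 : rmem r w1 -> rmem (RStar r) w2 -> rmem (RStar r) (w1 ++ w2).

(** Reading a token string as a regular expression, with the usual precedence
    (star over concatenation over union) and parentheses for grouping. *)
Inductive readU (k : nat) : seq tok -> regex -> Prop :=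
  | rU1 s r : readC k s r -> readU k s r
  | rU2 s1 s2 r1 r2 : readU k s1 r1 -> readC k s2 r2 ->
      readU k (s1 ++ TPlus :: s2) (RUnion r1 r2)
with readC (k : nat) : seq tok -> regex -> Prop :=
  | rC1 s r : readS k s r -> readC k s r
  | rC2 s1 s2 r1 r2 : readC k s1 r1 -> readS k s2 r2 -> readC k (s1 ++ s2) (RCat r1 r2)
with readS (k : nat) : seq tok -> regex -> Prop :=
  | rS1 s r : readA k s r -> readS k s r
  | rS2 s r : readS k s r -> readS k (rcons s TStar) (RStar r)
with readA (k : nat) : seq tok -> regex -> Prop :=
  | rAsym i : i < k -> readA k [:: TA i] (RSym i)
  | rAeps : readA k [:: TEps] REps
  | rApar s r : readU k s r -> readA k (TL :: rcons s TR) r.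

Definition reads (k : nat) (s : seq tok) (r : regex) : Prop := readU k s r.

(* Main.v *)
Require Import Defs.
From mathcomp Require Import all_boot.
From mathcomp Require Import zify.
Import Defs.
Set Implicit Arguments. Unset Strict Implicit.

Scheme readU_mind := Induction for readU Sort Prop
with readC_mind := Induction for readC Sort Prop
with readS_mind := Induction for readS Sort Prop
with readA_mind := Induction for readA Sort Prop.
Combined Scheme read_mutind from readU_mind, readC_mind, readS_mind, readA_mind.

Fixpoint nl (s : seq tok) : nat :=
  match s with [::] => 0 | TL :: s' => (nl s').+1 | _ :: s' => nl s' end.
Fixpoint nr (s : seq tok) : nat :=
  match s with [::] => 0 | TR :: s' => (nr s').+1 | _ :: s' => nr s' end.

Lemma nl_cat p q : nl (p ++ q) = nl p + nl q.
Proof. by elim: p => [|[] p IH] //=; rewrite IH. Qed.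
Lemma nr_cat p q : nr (p ++ q) = nr p + nr q.
Proof. by elim: p => [|[] p IH] //=; rewrite IH. Qed.

Lemma cat_eq_cat (A : Type) (p q a b : seq A) : p ++ q = a ++ b ->
  (exists m, a = p ++ m /\ q = m ++ b) \/ (exists m, p = a ++ m /\ b = m ++ q).
Proof.
elim: p a => [|x p IH] a /=; first by left; exists a.
case: a => [|y a] /= H; first by right; exists (x :: p).
case: H => -> /IH [[m [-> ->]]|[m [-> ->]]]; [left|right]; by exists m.
Qed.

Definition Bal s := (forall p q, s = p ++ q -> nr p <= nl p) /\ nl s = nr s.
Definition Prim s := forall p q, s = p ++ q -> p <> [::] -> q <> [::] -> nr p < nl p.
Definition NTP s := forall p q, s = p ++ TPlus :: q -> nr p < nl p.
Definition startok (s : seq tok) :=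
  match s with TA _ :: _ | TEps :: _ | TL :: _ => True | _ => False end.
Definition nostar (s : seq tok) := forall z, s <> TStar :: z.

Lemma Bal_cat a b : Bal a -> Bal b -> Bal (a ++ b).
Proof.
move=> [Ha1 Ha2] [Hb1 Hb2]; split; last by rewrite nl_cat nr_cat; lia.
move=> p q /cat_eq_cat [[m [E1 E]]|[m [E1 E]]].
- subst p. rewrite nl_cat nr_cat. have := Hb1 m q E. lia.
- by apply: (Ha1 p m).
Qed.

Lemma Bal_tok t : t <> TL -> t <> TR -> Bal [:: t].
Proof.
move=> h1 h2; split; last by case: t h1 h2.
move=> [|x p] q //= [<-]; case: p => //= _; by case: t h1 h2.
Qed.

Lemma NTP_cat a b : NTP a -> NTP b -> Bal a -> NTP (a ++ b).
Proof.
move=> Ha Hb [_ Ba] p q /esym E.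
case: (cat_eq_cat E) => [[m [E1 E2]]|[m [-> E2]]].
- case: m E1 E2 => [|x m] E1 E2.
  + have := Hb [::] q (esym E2). done.
  + case: E2 => Ex _; subst x. apply: (Ha p m). by rewrite E1.
- rewrite nl_cat nr_cat. have := Hb m q E2. lia.
Qed.

Lemma NTP_tok t : t <> TPlus -> NTP [:: t].
Proof.
move=> h [|x p] q /=; first by case=> E; rewrite E in h.
by case=> _ /(f_equal size) /=; rewrite size_cat /=; lia.
Qed.

Definition Aprop s := Bal s /\ startok s /\ Prim s /\ (forall p, s <> rcons p TStar).
Definition Sprop s := Bal s /\ startok s /\ NTP s.
Definition Cprop s := Bal s /\ startok s /\ NTP s.
Definition Uprop s := Bal s /\ startok s.

Lemma startok_cat a b : startok a -> startok (a ++ b).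
Proof. by case: a => [|[]]. Qed.

Lemma rcons_neq_star_cat (p : seq tok) q t : t <> TStar -> rcons p t <> rcons q TStar.
Proof. move=> h /(f_equal (fun s => last TEps s)); rewrite !last_rcons; done. Qed.

Lemma Prim_paren u : Bal u -> Prim (TL :: rcons u TR).
Proof.
move=> [B1 B2] [|x p] q //= E _ Hq.
case: E => Ex E; subst x; rewrite -cats1 in E.
case: (cat_eq_cat (esym E)) => [[m [E1 E2]]|[m [E1 E2]]].
- have := B1 p m E1. lia.
- case: m E1 E2 => [|y m] E1 /= E2.
  + rewrite E1 cats0 -B2. lia.
  + case: E2 => _; case: m E1 => //= _; by case: q Hq E.
Qed.

Lemma Bal_paren u : Bal u -> Bal (TL :: rcons u TR).
Proof.
move=> Bu; have P := Prim_paren Bu; case: Bu => B1 B2; split.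
- move=> p q E. case: p E => [|x p] E; first by [].
  case: q E => [|y q] E.
  + rewrite cats0 in E; rewrite -E /= -cats1 nl_cat nr_cat /=; lia.
  + have := P (x :: p) (y :: q) E ltac:(done) ltac:(done). lia.
- rewrite /= -cats1 nl_cat nr_cat /=; lia.
Qed.

Lemma NTP_of_Prim s : Prim s -> startok s -> NTP s.
Proof.
move=> P S [|x p] q E; first by rewrite E in S.
by apply: (P _ (TPlus :: q) E).
Qed.

Lemma Prim_tok t : Prim [:: t].
Proof. by move=> [|x [|y p]] [|z q] //=. Qed.

Lemma read_props k :
  (forall s r, readU k s r -> Uprop s) /\ (forall s r, readC k s r -> Cprop s) /\
  (forall s r, readS k s r -> Sprop s) /\ (forall s r, readA k s r -> Aprop s).
Proof.
apply: (read_mutind (P := fun s r _ => Uprop s) (P0 := fun s r _ => Cprop s)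
  (P1 := fun s r _ => Sprop s) (P2 := fun s r _ => Aprop s)).
- by move=> s r _ [? [? ?]].
- move=> s1 s2 r1 r2 _ [B1 S1] _ [B2 [S2 _]]; split; last exact: startok_cat.
  apply: Bal_cat => //; apply: (@Bal_cat [:: TPlus]) => //; exact: Bal_tok.
- by move=> s r _ [? [? ?]].
- move=> s1 s2 r1 r2 _ [B1 [S1 N1]] _ [B2 [S2 N2]]; split; first exact: Bal_cat.
  split; first exact: startok_cat. exact: NTP_cat.
- move=> s r _ [B [S [P _]]]; split => //; split => //; exact: NTP_of_Prim.
- move=> s r _ [B [S N]]; rewrite -cats1; split; first by apply: Bal_cat => //; exact: Bal_tok.
  split; first exact: startok_cat. apply: NTP_cat => //. exact: NTP_tok.
- move=> i _; split; first exact: Bal_tok. split => //; split; first exact: Prim_tok.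
  move=> p; case: p => [|x [|y p]] //.
- split; first exact: Bal_tok. split => //; split; first exact: Prim_tok.
  move=> p; case: p => [|x [|y p]] //.
- move=> s r _ [B S]; split; first exact: Bal_paren. split => //; split; first exact: Prim_paren.
  move=> p /(f_equal (fun s => last TEps s)) /=. rewrite last_rcons.
  case: p => [|x p] /=; first by [].
  by rewrite last_rcons.
Qed.

Definition req r1 r2 := forall w, rmem r1 w <-> rmem r2 w.

Lemma req_refl r : req r r. Proof. by []. Qed.
Lemma req_sym r1 r2 : req r1 r2 -> req r2 r1. Proof. by move=> H w; rewrite H. Qed.
Lemma req_trans r1 r2 r3 : req r1 r2 -> req r2 r3 -> req r1 r3.
Proof. by move=> H1 H2 w; rewrite H1. Qed.

Lemma rmem_union r1 r2 w : rmem (RUnion r1 r2) w <-> rmem r1 w \/ rmem r2 w.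
Proof.
split; first by move=> H; inversion H; subst; [left|right].
by case=> H; [apply: mUl|apply: mUr].
Qed.

Lemma rmem_cat r1 r2 w : rmem (RCat r1 r2) w <->
  exists w1 w2, w = w1 ++ w2 /\ rmem r1 w1 /\ rmem r2 w2.
Proof.
split; first by move=> H; inversion H; subst; exists w1, w2.
by case=> w1 [w2 [-> [H1 H2]]]; apply: mCat.
Qed.

Lemma rmem_sym i w : rmem (RSym i) w <-> w = [:: i].
Proof. split; first by move=> H; inversion H. by move=> ->; constructor. Qed.

Lemma rmem_eps w : rmem REps w <-> w = [::].
Proof. split; first by move=> H; inversion H. by move=> ->; constructor. Qed.

Lemma req_union a1 a2 b1 b2 : req a1 a2 -> req b1 b2 -> req (RUnion a1 b1) (RUnion a2 b2).
Proof. by move=> Ha Hb w; rewrite !rmem_union Ha Hb. Qed.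

Lemma req_cat a1 a2 b1 b2 : req a1 a2 -> req b1 b2 -> req (RCat a1 b1) (RCat a2 b2).
Proof.
move=> Ha Hb w; rewrite !rmem_cat; split;
  case=> w1 [w2 [-> [H1 H2]]]; exists w1, w2; rewrite ?Ha ?Hb; [split; rewrite -?Ha -?Hb|split; rewrite ?Ha ?Hb] => //.
Qed.

Lemma req_cat_assoc a b c : req (RCat (RCat a b) c) (RCat a (RCat b c)).
Proof.
move=> w; rewrite !rmem_cat; split.
- case=> w1 [w2 [-> [/rmem_cat [u1 [u2 [-> [H1 H2]]]] H3]]].
  exists u1, (u2 ++ w2); rewrite catA; split => //; split => //.
  by apply/rmem_cat; exists u2, w2.
- case=> w1 [w2 [-> [H1 /rmem_cat [u1 [u2 [-> [H2 H3]]]]]]].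
  exists (w1 ++ u1), u2; rewrite catA; split => //; split => //.
  by apply/rmem_cat; exists w1, u1.
Qed.

Lemma req_union_assoc a b c : req (RUnion (RUnion a b) c) (RUnion a (RUnion b c)).
Proof. move=> w; rewrite !rmem_union; tauto. Qed.

Lemma req_star_imp a b : req a b -> forall w, rmem (RStar a) w -> rmem (RStar b) w.
Proof.
move=> H w Hw; remember (RStar a) as x eqn:Ex; elim: Hw Ex => // {w x}.
- by move=> r _; constructor.
- move=> r w1 w2 H1 _ H2 IH [Er]; subst r; apply: mStarS; first by rewrite -H.
  exact: IH.
Qed.

Lemma req_star a b : req a b -> req (RStar a) (RStar b).
Proof. move=> H w; split; apply: req_star_imp => //; exact: req_sym. Qed.

Lemma startok_ne s : startok s -> s <> [::]. Proof. by case: s. Qed.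

Lemma atom_pref k a1 a2 x y r1 r2 :
  readA k a1 r1 -> readA k a2 r2 -> a1 ++ x = a2 ++ y -> a1 = a2.
Proof.
have [_ [_ [_ HA]]] := read_props k.
move=> /HA [[_ B1] [S1 [P1 _]]] /HA [[_ B2] [S2 [P2 _]]] /cat_eq_cat [[m [E _]]|[m [E _]]].
- case: m E => [|z m] E; first by rewrite E cats0.
  have := P2 a1 (z :: m) E (startok_ne S1) ltac:(done). lia.
- case: m E => [|z m] E; first by rewrite E cats0.
  have := P1 a2 (z :: m) E (startok_ne S2) ltac:(done). lia.
Qed.

Lemma rcons_nseq (A : Type) n (x : A) : rcons (nseq n x) x = nseq n.+1 x.
Proof. by elim: n => //= n ->. Qed.

Lemma readS_dec k s r : readS k s r ->
  exists a ra n, readA k a ra /\ s = a ++ nseq n TStar /\ r = iter n RStar ra.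
Proof.
elim => {s r}.
- move=> s r H; by exists s, r, 0; rewrite cats0.
- move=> s r _ [a [ra [n [H [-> ->]]]]]; exists a, ra, n.+1; split => //.
  by rewrite rcons_cat rcons_nseq.
Qed.

Lemma catI (A : Type) (a p q : seq A) : a ++ p = a ++ q -> p = q.
Proof. by elim: a => //= x a IH [/IH]. Qed.

Lemma nseq_star_eq n1 n2 x y : nostar x -> nostar y ->
  nseq n1 TStar ++ x = nseq n2 TStar ++ y -> n1 = n2.
Proof.
move=> hx hy; elim: n1 n2 => [|n1 IH] [|n2] //=.
- by move=> E; case: (hx _ E).
- by move=> E; case: (hy _ (esym E)).
- by case=> /IH ->.
Qed.

Lemma unit_pref k u1 u2 x y r1 r2 : readS k u1 r1 -> readS k u2 r2 ->
  nostar x -> nostar y -> u1 ++ x = u2 ++ y -> u1 = u2.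
Proof.
move=> /readS_dec [a1 [q1 [n1 [A1 [-> _]]]]] /readS_dec [a2 [q2 [n2 [A2 [-> _]]]]] hx hy.
rewrite -!catA => E; have Ea := atom_pref A1 A2 E; subst a2.
have := catI E => /(nseq_star_eq hx hy) ->. done.
Qed.

Lemma readC_left k s r : readC k s r -> readS k s r \/
  exists s1 s2 r1 r2, s = s1 ++ s2 /\ readS k s1 r1 /\ readC k s2 r2 /\ req r (RCat r1 r2).
Proof.
elim => {s r}; first by move=> s r H; left.
move=> s1 s2 r1 r2 _ [H1|[t1 [t2 [q1 [q2 [-> [Ht1 [Ht2 Hr]]]]]]]] H2; right.
- by exists s1, s2, r1, r2; split => //; split => //; split => //; constructor.
- exists t1, (t2 ++ s2), q1, (RCat q2 r2); rewrite catA; split => //; split => //.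
  split; first by apply: rC2.
  apply: req_trans (req_cat_assoc _ _ _). by apply: req_cat.
Qed.

Lemma readU_left k s r : readU k s r -> readC k s r \/
  exists s1 s2 r1 r2, s = s1 ++ TPlus :: s2 /\ readC k s1 r1 /\ readU k s2 r2 /\
     req r (RUnion r1 r2).
Proof.
elim => {s r}; first by move=> s r H; left.
move=> s1 s2 r1 r2 _ [H1|[t1 [t2 [q1 [q2 [-> [Ht1 [Ht2 Hr]]]]]]]] H2; right.
- by exists s1, s2, r1, r2; split => //; split => //; split => //; constructor.
- exists t1, (t2 ++ TPlus :: s2), q1, (RUnion q2 r2); rewrite -catA; split => //; split => //.
  split; first by apply: rU2.
  apply: req_trans (req_union_assoc _ _ _). by apply: req_union.
Qed.

Lemma startok_nostar s : startok s -> nostar s.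
Proof. by case: s => [|[]] // ? ? ? []. Qed.

Lemma req_iter n a b : req a b -> req (iter n RStar a) (iter n RStar b).
Proof. elim: n => //= n IH H; apply: req_star; exact: IH. Qed.

Lemma read_uniq_all k n : forall s, size s < n ->
  (forall r1 r2, readA k s r1 -> readA k s r2 -> req r1 r2) /\
  (forall r1 r2, readS k s r1 -> readS k s r2 -> req r1 r2) /\
  (forall r1 r2, readC k s r1 -> readC k s r2 -> req r1 r2) /\
  (forall r1 r2, readU k s r1 -> readU k s r2 -> req r1 r2).
Proof.
have [HU [HC [HS HA]]] := read_props k.
elim: n => [|n IH] s Hs //.
have hA : forall r1 r2, readA k s r1 -> readA k s r2 -> req r1 r2.
  move=> r1 r2 H1 H2; inversion H1; subst; inversion H2; subst; try exact: req_refl.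
  match goal with H : rcons _ TR = rcons _ TR |- _ => move: H => /rcons_inj; case=> E; subst end.
  match goal with H : readU k ?u _ |- _ =>
    have [_ [_ [_ U]]] := IH u ltac:(move: Hs; rewrite /= size_rcons; lia) end.
  by apply: U.
have hS : forall r1 r2, readS k s r1 -> readS k s r2 -> req r1 r2.
  move=> r1 r2 /readS_dec [a1 [q1 [n1 [A1 [E1 ->]]]]] /readS_dec [a2 [q2 [n2 [A2 [E2 ->]]]]].
  have Ea : a1 = a2 by apply: (atom_pref (x := nseq n1 TStar) (y := nseq n2 TStar) A1 A2); rewrite -E1 -E2.
  subst a2; rewrite E1 in E2; have := catI E2 => /(f_equal size); rewrite !size_nseq => En.
  subst n2; apply: req_iter.
  have Hsz : size a1 < n.+1 by move: Hs; rewrite E1 size_cat; lia.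
  have := HA _ _ A1 => -[_ [Sa _]].
  clear E2; case: n1 E1 => [|n1] E1.
  - rewrite cats0 in E1; subst s; exact: hA.
  - have [h _] := IH a1 ltac:(move: Hs; rewrite E1 size_cat size_nseq; lia). exact: h.
have hC : forall r1 r2, readC k s r1 -> readC k s r2 -> req r1 r2.
  move=> r1 r2 /readC_left [H1|[u1 [v1 [p1 [q1 [E1 [Hu1 [Hv1 R1]]]]]]]]
               /readC_left [H2|[u2 [v2 [p2 [q2 [E2 [Hu2 [Hv2 R2]]]]]]]].
  - exact: hS.
  - have [_ [Sv _]] := HC _ _ Hv2.
    have := unit_pref H1 Hu2 (x := [::]) (y := v2) ltac:(done) (startok_nostar Sv).
    rewrite cats0 -E2 => /(_ erefl) E; rewrite {1}E in E2.
    have := catI (etrans (esym E2) (esym (cats0 u2))). move=> Ev; subst v2. done.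
  - have [_ [Sv _]] := HC _ _ Hv1.
    have := unit_pref H2 Hu1 (x := [::]) (y := v1) ltac:(done) (startok_nostar Sv).
    rewrite cats0 -E1 => /(_ erefl) E; rewrite {1}E in E1.
    have := catI (etrans (esym E1) (esym (cats0 u1))). move=> Ev; subst v1. done.
  - have [_ [Sv1 _]] := HC _ _ Hv1; have [_ [Sv2 _]] := HC _ _ Hv2.
    have Eu : u1 = u2.
      apply: (unit_pref Hu1 Hu2 (startok_nostar Sv1) (startok_nostar Sv2)).
      by rewrite -E1 -E2.
    subst u2; rewrite E1 in E2; have Ev := catI E2; subst v2.
    apply: req_trans R1 _; apply: req_trans _ (req_sym R2); apply: req_cat.
    + case: v1 Sv1 {Hv1 Hv2 Sv2 E2} E1 => // x v1 _ E1.
      have [_ [h _]] := IH u1 ltac:(move: Hs; rewrite E1 size_cat /=; lia). exact: h.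
    + have := HS _ _ Hu1 => -[_ [Su _]]. case: u1 Su {Hu1 Hu2 E2} E1 => // x u1 _ E1.
      have [_ [_ [h _]]] := IH v1 ltac:(move: Hs; rewrite E1 size_cat /=; lia). exact: h.
split => //; split => //; split => //.
move=> r1 r2 /readU_left [H1|[u1 [v1 [p1 [q1 [E1 [Hu1 [Hv1 R1]]]]]]]]
             /readU_left [H2|[u2 [v2 [p2 [q2 [E2 [Hu2 [Hv2 R2]]]]]]]].
- exact: hC.
- have [_ [_ N]] := HC _ _ H1; have [[_ B] _] := HC _ _ Hu2.
  have := N u2 v2 E2. lia.
- have [_ [_ N]] := HC _ _ H2; have [[_ B] _] := HC _ _ Hu1.
  have := N u1 v1 E1. lia.
- have [[_ B1] [Su1 N1]] := HC _ _ Hu1; have [[_ B2] [Su2 N2]] := HC _ _ Hu2.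
  have Eu : u1 = u2.
    have E := etrans (esym E1) E2.
    case: (cat_eq_cat E) => [[m [Em Em2]]|[m [Em Em2]]].
    + case: m Em Em2 => [|x m] Em Em2; first by rewrite Em cats0.
      case: Em2 => Ex _; subst x. have := N2 u1 m Em. lia.
    + case: m Em Em2 => [|x m] Em Em2; first by rewrite Em cats0.
      case: Em2 => Ex _; subst x. have := N1 u2 m Em. lia.
  subst u2; rewrite E1 in E2; have Ev := catI E2; case: Ev => Ev; subst v2.
  apply: req_trans R1 _; apply: req_trans _ (req_sym R2); apply: req_union.
  + have [_ [_ [h _]]] := IH u1 ltac:(move: Hs; rewrite E1 size_cat /=; lia). exact: h.
  + case: u1 Su1 {Hu1 Hu2 E2 B1 B2 N1 N2 Su2} E1 => // x u1 _ E1.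
    have [_ [_ [_ h]]] := IH v1 ltac:(move: Hs; rewrite E1 size_cat /=; lia). exact: h.
Qed.

Lemma read_uniq k s r1 r2 : readU k s r1 -> readU k s r2 -> req r1 r2.
Proof. by have [_ [_ [_ h]]] := read_uniq_all k (ltnSn (size s)); apply: h. Qed.


Inductive pd := DEps | DE of en | DStar of nat | DStarE of nat & en
with en := EN of bool & pl
with pl := PNil | PCons of nat & pd & pl.

Scheme pd_mind := Induction for pd Sort Prop
with en_mind := Induction for en Sort Prop
with pl_mind := Induction for pl Sort Prop.
Combined Scheme ast_mind from pd_mind, en_mind, pl_mind.

Fixpoint szd d := match d with DEps => 1 | DE e => (sze e).+1 | DStar _ => 1
  | DStarE _ e => (sze e).+1 end
with sze e := match e with EN _ l => (szl l).+1 end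
with szl l := match l with PNil => 1 | PCons _ d l => szd d + szl l + 1 end.

Fixpoint semd d (w : seq nat) : Prop :=
  match d with
  | DEps => w = [::]
  | DE e => seme e w
  | DStar j => exists n, w = nseq n j
  | DStarE j e => exists n w', w = nseq n j ++ w' /\ seme e w'
  end
with seme e w := match e with EN b l => (b /\ w = [::]) \/ seml l w end
with seml l w := match l with PNil => False
  | PCons i d l => (exists w', w = i :: w' /\ semd d w') \/ seml l w end.

Fixpoint letters l := match l with PNil => [::] | PCons i _ l => i :: letters l end.

Section WF.
Variable k : nat.
Fixpoint wfd (p : bool) (i : nat) d :=
  match d with
  | DEps => True
  | DE e => wfe None e
  | DStar j => j < k /\ (p -> j <> i)
  | DStarE j e => j < k /\ (p -> j <> i) /\ wfe (Some j) e
  end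
with wfe (x : option nat) e :=
  match e with EN b l =>
    0 < size (letters l) /\ sorted ltn (letters l) /\ all (fun n => n < k) (letters l) /\
    (forall j, x = Some j -> j \notin letters l) /\ wfl (b || (1 < size (letters l))) l
  end
with wfl p l := match l with PNil => True | PCons i d l => wfd p i d /\ wfl p l end.
End WF.

Definition single l := match l with PCons _ _ PNil => true | _ => false end.

Fixpoint prd d : seq tok :=
  match d with
  | DEps => [::]
  | DE e => pre e
  | DStar j => [:: TA j; TStar]
  | DStarE j e => [:: TA j; TStar] ++ pre e
  end
with pre e :=
  match e with EN b l =>
    if b then TL :: TEps :: TPlus :: prl l ++ [:: TR]
    else if single l then prl l else TL :: prl l ++ [:: TR]
  end
with prl l :=
  match l with PNil => [::]
  | PCons i d l' => TA i :: prd d ++ (match l' with PNil => [::] | _ => TPlus :: prl l' end)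
  end.

Definition prS e := match e with EN _ l => prl l end.

Definition denot r (P : seq nat -> Prop) := forall w, rmem r w <-> P w.

Lemma catC k s1 s2 r1 r2 : readC k s1 r1 -> readC k s2 r2 ->
  exists r, readC k (s1 ++ s2) r /\ req r (RCat r1 r2).
Proof.
move=> H1 H2; elim: H2 => {s2 r2}.
- move=> s r H; exists (RCat r1 r); split; [exact: rC2|exact: req_refl].
- move=> t1 t2 q1 q2 _ [r' [Hr' Er']] H2; exists (RCat r' q2); rewrite catA; split.
  + exact: rC2.
  + apply: req_trans (req_cat_assoc _ _ _); apply: req_cat => //; exact: req_refl.
Qed.

Lemma unionU k s1 s2 r1 r2 : readU k s1 r1 -> readU k s2 r2 ->
  exists r, readU k (s1 ++ TPlus :: s2) r /\ req r (RUnion r1 r2).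
Proof.
move=> H1 H2; elim: H2 => {s2 r2}.
- move=> s r H; exists (RUnion r1 r); split; [exact: rU2|exact: req_refl].
- move=> t1 t2 q1 q2 _ [r' [Hr' Er']] H2; exists (RUnion r' q2).
  have -> : s1 ++ TPlus :: t1 ++ TPlus :: t2 = (s1 ++ TPlus :: t1) ++ TPlus :: t2 by rewrite -catA.
  split; first exact: rU2.
  apply: req_trans (req_union_assoc _ _ _); apply: req_union => //; exact: req_refl.
Qed.

Lemma star_sym j w : rmem (RStar (RSym j)) w <-> exists n, w = nseq n j.
Proof.
split.
- move=> H; remember (RStar (RSym j)) as x eqn:Ex; elim: H Ex => // {w x}.
  + by move=> r _; exists 0.
  + move=> r w1 w2 H1 _ _ IH [Er]; subst r; case: (IH erefl) => n ->.
    by move/rmem_sym: H1 => ->; exists n.+1.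
- case=> n ->; elim: n => [|n IH]; first exact: mStar0.
  by apply: (@mStarS _ [:: j]) => //; apply/rmem_sym.
Qed.

Definition Pw i (P : seq nat -> Prop) w := exists w', w = i :: w' /\ P w'.

Lemma readC_sym k i : i < k -> readC k [:: TA i] (RSym i).
Proof. by move=> h; do 2 constructor; apply: rAsym. Qed.

Lemma rd_all k :
  (forall d p i, i < k -> wfd k p i d -> exists r, readC k (TA i :: prd d) r /\ denot r (Pw i (semd d))) /\
  (forall e x, wfe k x e -> exists r, readC k (pre e) r /\ denot r (seme e)) /\
  (forall l p, wfl k p l -> all (fun n => n < k) (letters l) -> l <> PNil ->
     exists r, readU k (prl l) r /\ denot r (seml l) /\ (single l -> readC k (prl l) r)).
Proof.
apply: ast_mind.
- move=> p i hi _; exists (RSym i); split; first exact: readC_sym.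
  move=> w; rewrite rmem_sym /Pw /=; split; first by move=> ->; exists [::].
  by case=> w' [-> ->].
- move=> e IHe p i hi /= /IHe [r [Hr Dr]].
  have [r' [Hr' Er']] := catC (readC_sym hi) Hr.
  exists r'; split => //= w; rewrite Er' rmem_cat; split.
  + case=> w1 [w2 [-> [/rmem_sym -> /Dr H2]]]; by exists w2.
  + case=> w' [-> /Dr H]; exists [:: i], w'; split => //; split => //; exact/rmem_sym.
- move=> j p i hi /= [hj _].
  exists (RCat (RSym i) (RStar (RSym j))); split.
  + apply: (@rC2 k [:: TA i] [:: TA j; TStar]); first exact: readC_sym.
    apply: (@rS2 k [:: TA j]); constructor; exact: rAsym.
  + move=> w; rewrite rmem_cat; split.
    * case=> w1 [w2 [-> [/rmem_sym -> /star_sym H]]]; by exists w2.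
    * case=> w' [-> H]; exists [:: i], w'; split => //; split; [exact/rmem_sym|exact/star_sym].
- move=> j e IHe p i hi /= [hj [_ /IHe [r [Hr Dr]]]].
  have Hs : readC k [:: TA i; TA j; TStar] (RCat (RSym i) (RStar (RSym j))).
    apply: (@rC2 k [:: TA i] [:: TA j; TStar]); first exact: readC_sym.
    apply: (@rS2 k [:: TA j]); constructor; exact: rAsym.
  have [r' [Hr' Er']] := catC Hs Hr.
  exists r'; split => // w; rewrite Er' rmem_cat; split.
  + case=> w1 [w2 [-> [/rmem_cat [u1 [u2 [-> [/rmem_sym -> /star_sym [n ->]]]]] /Dr H2]]].
    exists (nseq n j ++ w2); split => //; by exists n, w2.
  + case=> w' [-> [n [w'' [-> H]]]]; exists (i :: nseq n j), w''; split => //; split.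
    * apply/rmem_cat; exists [:: i], (nseq n j); split => //; split; [exact/rmem_sym|apply/star_sym; by exists n].
    * exact/Dr.
- move=> b l IHl x /= [hs [_ [hk [_ hw]]]].
  have lne : l <> PNil by case: l hs {IHl hw hk}.
  have [r [Hr [Dr Hsg]]] := IHl _ hw hk lne.
  case: b {hw}.
  + have He : readU k [:: TEps] REps by apply: rU1; apply: rC1; apply: rS1; apply: rAeps.
    have [r' [Hr' Er']] := unionU He Hr.
    exists r'; split.
    * do 2 constructor. rewrite cats1. apply: (@rApar k (TEps :: TPlus :: prl l)); exact: Hr'.
    * move=> w; rewrite Er' rmem_union rmem_eps Dr /=; split; [case=> H; [left|right]|case=> [[_ H]|H]; [left|right]] => //.
  + case Es: (single l).
    * exists r; split; first exact: Hsg.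
      move=> w; rewrite Dr /=; split; [by right|by case=> // -[]].
    * exists r; split.
      -- do 2 constructor. rewrite cats1. apply: rApar; exact: Hr.
      -- move=> w; rewrite Dr /=; split; [by right|by case=> // -[]].
- by [].
- move=> i d IHd l IHl p /= [hd hl] /andP [hi hk] _.
  have [r [Hr Dr]] := IHd _ _ hi hd.
  case El: l => [|j d' l'].
  + exists r; split; first by rewrite cats0; constructor.
    split; last by rewrite cats0.
    move=> w; rewrite Dr /Pw /=; tauto.
  + rewrite -El; have [r2 [Hr2 [Dr2 _]]] := IHl _ hl hk ltac:(by rewrite El).
    have [r' [Hr' Er']] := unionU (rU1 Hr) Hr2.
    exists r'; split; first by rewrite -cat_cons El; rewrite El in Hr'.
    split; last by rewrite El.
    move=> w; rewrite Er' rmem_union Dr Dr2 /Pw; tauto.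
Qed.


Fixpoint mp c d l := match l with PNil => False
  | PCons i d' l => (i = c /\ d' = d) \/ mp c d l end.

Lemma seml_cons l c w : seml l (c :: w) <-> exists d, mp c d l /\ semd d w.
Proof.
elim: l => [|i d l IH] /=; first by split => //; case=> d [[]].
rewrite IH; split.
- case=> [[w' [[-> <-] H]]|[d' [H1 H2]]]; first by exists d; split => //; left.
  by exists d'; split => //; right.
- case=> d' [[[-> ->]|H1] H2]; first by left; exists w.
  by right; exists d'.
Qed.

Lemma seml_nil l : ~ seml l [::].
Proof. by elim: l => //= i d l IH [[w' []]|]. Qed.

Lemma mp_letter c d l : mp c d l -> c \in letters l.
Proof. elim: l => //= i d' l IH [[-> _]|/IH H]; rewrite inE ?eqxx //= H orbT //. Qed.

Lemma mp_wf k p c d l : wfl k p l -> mp c d l -> wfd k p c d.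
Proof. elim: l => //= i d' l IH [H1 H2] [[E1 E2]|/IH]; [by subst|by auto]. Qed.

Lemma mp_sz c d l : mp c d l -> szd d < szl l.
Proof. elim: l => //= i d' l IH [[_ ->]|/IH]; lia. Qed.

Lemma mp_uniq c d1 d2 l : uniq (letters l) -> mp c d1 l -> mp c d2 l -> d1 = d2.
Proof.
elim: l => //= i d l IH /andP [ni u] H1 H2.
case: H1 => [[E1 F1]|H1]; case: H2 => [[E2 F2]|H2]; subst => //.
- by move: ni; rewrite (mp_letter H2).
- by move: ni; rewrite (mp_letter H1).
- exact: IH.
Qed.

Lemma seml_head l w : seml l w -> exists c w', w = c :: w' /\ c \in letters l.
Proof.
case: w => [|c w]; first by move/seml_nil.
by move/seml_cons => [d [/mp_letter H _]]; exists c, w.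
Qed.

Definition lettersE e := match e with EN _ l => letters l end.

Lemma sem_ne k :
  (forall d p i, wfd k p i d -> exists w, semd d w) /\
  (forall e x, wfe k x e -> exists c w, seme e (c :: w) /\ c \in lettersE e) /\
  (forall l p, wfl k p l -> l <> PNil -> exists c w, seml l (c :: w) /\ c \in letters l).
Proof.
apply: ast_mind => //=.
- by move=> *; exists [::].
- move=> e IH p i /IH [c [w [H _]]]; by exists (c :: w).
- by move=> j p i _; exists [::], 0.
- move=> j e IH p i [_ [_ /IH [c [w [H _]]]]]; exists (c :: w), 0, (c :: w); split => //.
- move=> b l IH x [hs [_ [_ [_ hw]]]].
  have lne : l <> PNil by case: l hs {IH hw}.
  have [c [w [H1 H2]]] := IH _ hw lne. by exists c, w; split => //; right.
- move=> i d IHd l IHl p [hd hl] _.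
  have [w Hw] := IHd _ _ hd. exists i, w; split; first by left; exists w.
  by rewrite inE eqxx.
Qed.

Lemma seme_nil b l : seme (EN b l) [::] <-> b.
Proof. rewrite /=; split; first by case=> [[H _]|/seml_nil]. by move=> ->; left. Qed.

Lemma seme_cons b l c w : seme (EN b l) (c :: w) <-> exists d, mp c d l /\ semd d w.
Proof. by rewrite /= -seml_cons; split; [case=> // -[]|right]. Qed.

Lemma seme_excl k j e w : wfe k (Some j) e -> ~ seme e (j :: w).
Proof.
case: e => b l [_ [_ [_ [ex _]]]] /seme_cons [d [/mp_letter H _]].
by move: (ex j erefl); rewrite H.
Qed.

Lemma wfe_letter k x e c : wfe k x e -> c \in lettersE e ->
  (forall j, x = Some j -> c <> j).
Proof.
case: e => b l [_ [_ [_ [ex _]]]] /= H j E Ec; subst c; move: (ex j E). by rewrite H.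
Qed.

Lemma sorted_uniq_ltn (s : seq nat) : sorted ltn s -> uniq s.
Proof. move=> H; apply: (sorted_uniq (leT := ltn)) => //; [exact: ltn_trans|exact: ltnn]. Qed.

Definition wfany k d := exists p i, wfd k p i d.

Definition semeq (A B : seq nat -> Prop) := forall w, A w <-> B w.

Lemma sorted_head_lt (i c : nat) s : sorted ltn (i :: s) -> c \in s -> i < c.
Proof. move=> /= /(order_path_min ltn_trans) /allP H /H. done. Qed.

Lemma sorted_tail (i : nat) s : sorted ltn (i :: s) -> sorted ltn s.
Proof. by move=> /= /path_sorted. Qed.

Lemma no_head_in_tail i d r w : sorted ltn (letters (PCons i d r)) -> ~ seml r (i :: w).
Proof.
move=> S /seml_cons [d0 [/mp_letter H _]].
have := sorted_head_lt S H. by rewrite ltnn.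
Qed.

Lemma pl_eq k n (IH : forall d1 d2, szd d1 + szd d2 < n -> wfany k d1 -> wfany k d2 ->
     semeq (semd d1) (semd d2) -> d1 = d2) :
  forall l1 l2 p1 p2, szl l1 + szl l2 <= n -> sorted ltn (letters l1) -> sorted ltn (letters l2) ->
  wfl k p1 l1 -> wfl k p2 l2 -> semeq (seml l1) (seml l2) -> l1 = l2.
Proof.
have [_ [_ NE]] := sem_ne k.
elim=> [|i d r IHr] [|i' d' r'] p1 p2 Hsz S1 S2 W1 W2 E //.
- have [c [w [H _]]] := NE _ _ W2 ltac:(done). by move/E: H.
- have [c [w [H _]]] := NE _ _ W1 ltac:(done). by move/E: H.
have [wd Hwd] := (sem_ne k).1 _ _ _ W1.1.
have [wd' Hwd'] := (sem_ne k).1 _ _ _ W2.1.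
have Ei : i = i'.
  have H1 : seml (PCons i' d' r') (i :: wd) by apply/E; left; exists wd.
  have H2 : seml (PCons i d r) (i' :: wd') by apply/E; left; exists wd'.
  move/seml_cons: H1 => [x1 [/mp_letter /= H1 _]].
  move/seml_cons: H2 => [x2 [/mp_letter /= H2 _]].
  move: H1 H2; rewrite !inE => /orP [/eqP //|H1] /orP [/eqP //|H2].
  have := sorted_head_lt S1 H2; have := sorted_head_lt S2 H1. lia.
subst i'.
have Ed : d = d'.
  apply: IH; first by move: Hsz => /=; lia.
  - by exists p1, i; case: W1.
  - by exists p2, i; case: W2.
  move=> w; split => H.
  + have : seml (PCons i d' r') (i :: w) by apply/E; left; exists w.
    case=> [[w0 [[<-] //]]|/(no_head_in_tail S2) //].
  + have : seml (PCons i d r) (i :: w) by apply/E; left; exists w.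
    case=> [[w0 [[<-] //]]|/(no_head_in_tail S1) //].
subst d'; congr PCons.
apply: (IHr _ p1 p2); first by move: Hsz => /=; lia.
- exact: sorted_tail S1.
- exact: sorted_tail S2.
- by case: W1.
- by case: W2.
move=> [|c w]; first by split => /seml_nil.
case: (eqVneq c i) => [->|ne].
- by split => [/(no_head_in_tail S1)|/(no_head_in_tail S2)].
- split => H.
  + have : seml (PCons i d r') (c :: w) by apply/E; right.
    by case=> // -[w0 [[E1 _] _]]; move: ne; rewrite E1 eqxx.
  + have : seml (PCons i d r) (c :: w) by apply/E; right.
    by case=> // -[w0 [[E1 _] _]]; move: ne; rewrite E1 eqxx.
Qed.

Lemma en_eq k n (IH : forall d1 d2, szd d1 + szd d2 < n -> wfany k d1 -> wfany k d2 ->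
     semeq (semd d1) (semd d2) -> d1 = d2) :
  forall e1 e2 x1 x2, sze e1 + sze e2 <= n.+2 -> wfe k x1 e1 -> wfe k x2 e2 ->
  semeq (seme e1) (seme e2) -> e1 = e2.
Proof.
case=> b1 l1 [b2 l2] x1 x2 /= Hsz [_ [S1 [_ [_ W1]]]] [_ [S2 [_ [_ W2]]]] E.
have Eb : b1 = b2.
  apply/idP/idP => H.
  - by apply/(seme_nil b2 l2); apply/E/(seme_nil b1 l1).
  - by apply/(seme_nil b1 l1); apply/E/(seme_nil b2 l2).
subst b2; congr EN.
apply: (pl_eq IH (p1 := (b1 || (1 < size (letters l1)))) (p2 := (b1 || (1 < size (letters l2))))) => //.
- lia.
- move=> [|c w]; first by split => /seml_nil.
  split => H.
  + by have [[]|] : (b1 /\ c :: w = [::]) \/ seml l2 (c :: w) by apply/E; right.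
  + by have [[]|] : (b1 /\ c :: w = [::]) \/ seml l1 (c :: w) by apply/E; right.
Qed.

Lemma nseq_cons_eq n (j c : nat) w : nseq n j = c :: w -> c = j /\ w = nseq n.-1 j.
Proof. by case: n => //= n [-> ->]. Qed.

Lemma nseq_cat_cons n (j c : nat) w w' : nseq n j ++ w' = c :: w -> c <> j -> n = 0 /\ w' = c :: w.
Proof. by case: n => //= n [-> _]. Qed.

Lemma starE_deriv k j e w : wfe k (Some j) e ->
  semd (DStarE j e) (j :: w) <-> semd (DStarE j e) w.
Proof.
move=> We /=; split.
- case=> n [w' [E H]]; case: n E => [|n] /= E.
  + by subst w'; case: (seme_excl We H).
  + by case: E => E; exists n, w'.
- by case=> n [w' [-> H]]; exists n.+1, w'.
Qed.

Lemma starE_other j' e' j w : j <> j' ->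
  semd (DStarE j' e') (j :: w) <-> seme e' (j :: w).
Proof.
move=> ne /=; split.
- by case=> n [w' [E H]]; have [_ Ew] := nseq_cat_cons (esym E) ne; rewrite -Ew.
- by move=> H; exists 0, (j :: w).
Qed.

Section Inj.
Variable k : nat.

Lemma cross_eps_E x e : wfe k x e -> ~ semeq (fun w => w = [::]) (seme e).
Proof.
move=> We E; have [c [w [H _]]] := (sem_ne k).2.1 _ _ We. by move/E: H.
Qed.

Lemma cross_eps_star j : ~ semeq (fun w => w = [::]) (semd (DStar j)).
Proof. move=> E; have : semd (DStar j) [:: j] by exists 1. by move/E. Qed.

Lemma cross_eps_starE j e : wfe k (Some j) e -> ~ semeq (fun w => w = [::]) (semd (DStarE j e)).
Proof.
move=> We E; have [c [w [H _]]] := (sem_ne k).2.1 _ _ We.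
have : semd (DStarE j e) (j :: c :: w) by exists 1, (c :: w).
by move/E.
Qed.

Lemma cross_star_starE j j' e' : wfe k (Some j') e' ->
  ~ semeq (semd (DStar j)) (semd (DStarE j' e')).
Proof.
move=> We E; have [c [w [H Hc]]] := (sem_ne k).2.1 _ _ We.
have cj' := wfe_letter We Hc erefl.
have : semd (DStarE j' e') (c :: w) by exists 0, (c :: w).
move/E => [n /esym /nseq_cons_eq [Ec _]]; subst c.
have : semd (DStarE j' e') (j' :: j :: w) by exists 1, (j :: w).
by move/E => [m /esym /nseq_cons_eq [Ej _]]; apply: cj'.
Qed.

Lemma cross_E_star N (IH : forall d1 d2, szd d1 + szd d2 < N -> wfany k d1 -> wfany k d2 ->
     semeq (semd d1) (semd d2) -> d1 = d2) x e j :
  szd (DE e) + szd (DStar j) <= N -> wfe k x e -> wfany k (DStar j) ->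
  ~ semeq (seme e) (semd (DStar j)).
Proof.
case: e => b l Hsz We Wj E.
have Hb : b by apply/(seme_nil b l)/E; exists 0.
have [d [Hmp Hd]] : exists d, mp j d l /\ semd d [::].
  have H1 : seme (EN b l) [:: j] by apply/E; exists 1.
  by apply/seml_cons; case: H1 => [[]|].
case: We => [_ [S [_ [_ W]]]].
have Wd := mp_wf W Hmp; rewrite Hb /= in Wd.
have U := sorted_uniq_ltn S.
have Ed : d = DStar j.
  apply: IH => //; first by have := mp_sz Hmp; move: Hsz => /=; lia.
  - by exists true, j.
  move=> w; split => H.
  + have : seme (EN b l) (j :: w) by apply/seme_cons; exists d.
    by move/E => [n /esym /nseq_cons_eq [_ ->]]; exists n.-1.
  + have : seme (EN b l) (j :: w) by apply/E; case: H => n ->; exists n.+1.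
    by move/seme_cons => [d0 [H0 H1]]; rewrite (mp_uniq U Hmp H0).
subst d; by case: Wd => _ /(_ erefl).
Qed.

Lemma cross_E_starE N (IH : forall d1 d2, szd d1 + szd d2 < N -> wfany k d1 -> wfany k d2 ->
     semeq (semd d1) (semd d2) -> d1 = d2) x e j e' :
  szd (DE e) + szd (DStarE j e') <= N -> wfe k x e -> wfany k (DStarE j e') ->
  ~ semeq (seme e) (semd (DStarE j e')).
Proof.
case: e => b l Hsz We Wj E.
have We' : wfe k (Some j) e' by case: Wj => p [i [_ [_ H]]].
have [c [w0 [Hw0 Hc]]] := (sem_ne k).2.1 _ _ We'.
have cj := wfe_letter We' Hc erefl.
have [d [Hmp Hd]] : exists d, mp j d l /\ semd d (c :: w0).
  have H1 : seme (EN b l) (j :: c :: w0) by apply/E; exists 1, (c :: w0).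
  by apply/seml_cons; case: H1 => [[]|].
case: We => [Hs [S [_ [_ W]]]].
have Wd := mp_wf W Hmp.
have U := sorted_uniq_ltn S.
have Ed : d = DStarE j e'.
  apply: IH => //; first by have := mp_sz Hmp; move: Hsz => /=; lia.
  - by exists (b || (1 < size (letters l))), j.
  move=> w; rewrite -(starE_deriv w We'); split => H.
  + by apply/E/seme_cons; exists d.
  + by move/E/seme_cons: H => [d0 [H0 H1]]; rewrite (mp_uniq U Hmp H0).
subst d; case: Wd => _ [/= Hp _].
have Hp' : (b || (1 < size (letters l))) = false by case: (b || _) Hp => // /(_ erefl).
move: Hp' => /norP [/negbTE Hb Hl]; subst b.
clear Hsz Hp; case: l Hs Hl Hmp S W U E => // i0 d0 [] // _ _ /= [[Ei _]|//] _ _ _ E.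
subst i0.
have : seme (EN false (PCons j d0 PNil)) (c :: w0) by apply/E; exists 0, (c :: w0).
by case=> [[]|/=[[w' [[Ec] _]]|]].
Qed.

Lemma cross_starE_half N (IH : forall d1 d2, szd d1 + szd d2 < N -> wfany k d1 -> wfany k d2 ->
     semeq (semd d1) (semd d2) -> d1 = d2) j e j' e' :
  szd (DStarE j e) + szd (DStarE j' e') <= N -> j <> j' ->
  wfany k (DStarE j e) -> wfany k (DStarE j' e') ->
  semeq (semd (DStarE j e)) (semd (DStarE j' e')) -> sze e < sze e'.
Proof.
move=> Hsz ne W1 W2 E.
have We : wfe k (Some j) e by case: W1 => p [i [_ [_ H]]].
have We' : wfe k (Some j') e' by case: W2 => p [i [_ [_ H]]].
have [c [w0 [Hw0 Hc]]] := (sem_ne k).2.1 _ _ We.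
case: e' We' W2 E Hsz => b' l' We' W2 E Hsz.
have [d' [Hmp Hd]] : exists d', mp j d' l' /\ semd d' (c :: w0).
  apply/seml_cons.
  have H1 : semd (DStarE j' (EN b' l')) (j :: c :: w0) by apply/E; exists 1, (c :: w0).
  by move/(starE_other _ _ ne): H1; case=> [[]|].
case: We' => [Hs [S [_ [_ W]]]].
have Wd := mp_wf W Hmp.
have U := sorted_uniq_ltn S.
have Ed : d' = DStarE j e.
  apply: IH => //; first by have := mp_sz Hmp; move: Hsz => /=; lia.
  - by exists (b' || (1 < size (letters l'))), j.
  move=> w; rewrite -(starE_deriv w We); split => H.
  + apply/E/(starE_other _ _ ne)/seme_cons; by exists d'.
  + move/E/(starE_other _ _ ne)/seme_cons: H => [d0 [H0 H1]]; by rewrite (mp_uniq U Hmp H0).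
subst d'; have := mp_sz Hmp => /=; lia.
Qed.

Lemma wfe_none x e : wfe k x e -> wfe k None e.
Proof. by case: e => b l [? [? [? [_ ?]]]]; do 4 split => //. Qed.

Lemma inj_all n : forall d1 d2, szd d1 + szd d2 < n -> wfany k d1 -> wfany k d2 ->
  semeq (semd d1) (semd d2) -> d1 = d2.
Proof.
elim: n => [|n IH] // d1 d2 Hsz W1 W2 E.
have IH' : forall d1 d2, szd d1 + szd d2 < n -> wfany k d1 -> wfany k d2 ->
     semeq (semd d1) (semd d2) -> d1 = d2 by exact: IH.
have WE : forall e, wfany k (DE e) -> wfe k None e by move=> e [p [i H]].
have WS : forall j e, wfany k (DStarE j e) -> wfe k (Some j) e by move=> j e [p [i [_ [_ H]]]].
have Es : forall A B, semeq A B -> semeq B A by move=> A B H w; rewrite H.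
have Hz1 : szd d1 + szd d2 <= n by rewrite -ltnS.
have Hz2 : szd d2 + szd d1 <= n by rewrite addnC -ltnS.
case: d1 W1 E Hsz Hz1 Hz2 => [|e|j|j e] W1 E Hsz Hz1 Hz2;
  case: d2 W2 E Hsz Hz1 Hz2 => [|e'|j'|j' e'] W2 E Hsz Hz1 Hz2 //.
- by case: (cross_eps_E (WE _ W2) E).
- by case: (cross_eps_star E).
- by case: (cross_eps_starE (WS _ _ W2) E).
- by case: (cross_eps_E (WE _ W1) (Es _ _ E)).
- congr DE; apply: (en_eq IH' (x1 := None) (x2 := None)) => //; [move: Hsz => /=; lia|exact: WE|exact: WE].
- by case: (cross_E_star IH' Hz1 (WE _ W1) W2 E).
- by case: (cross_E_starE IH' Hz1 (WE _ W1) W2 E).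
- by case: (cross_eps_star (Es _ _ E)).
- by case: (cross_E_star IH' Hz2 (WE _ W2) W1 (Es _ _ E)).
- have : semd (DStar j) [:: j] by exists 1.
  by move/E => [m /esym /nseq_cons_eq [-> _]].
- by case: (cross_star_starE (WS _ _ W2) E).
- by case: (cross_eps_starE (WS _ _ W1) (Es _ _ E)).
- by case: (cross_E_starE IH' Hz2 (WE _ W2) W1 (Es _ _ E)).
- by case: (cross_star_starE (WS _ _ W1) (Es _ _ E)).
- case: (eqVneq j j') => [Ej|ne].
  + subst j'; congr DStarE.
    have We := WS _ _ W1; have We' := WS _ _ W2.
    apply: (en_eq IH' (x1 := Some j) (x2 := Some j)) => //; first by move: Hsz => /=; lia.
    move=> w; split => H.
    * have : semd (DStarE j e') w by apply/E; exists 0, w.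
      case=> [[|m] [w' [Ew H']]]; first by rewrite Ew.
      by move: H; rewrite Ew /=; move/(seme_excl We).
    * have : semd (DStarE j e) w by apply/E; exists 0, w.
      case=> [[|m] [w' [Ew H']]]; first by rewrite Ew.
      by move: H; rewrite Ew /=; move/(seme_excl We').
  + have ne' : j <> j' by move/eqP: ne.
    have h1 := cross_starE_half IH' Hz1 ne' W1 W2 E.
    have h2 := cross_starE_half IH' Hz2
                 (fun h => ne' (esym h)) W2 W1 (Es _ _ E).
    lia.
Qed.

End Inj.


Definition nE x := match x with None => NE | Some j => NEi j end.
Definition nY x := match x with None => NY | Some j => NYi j end.
Definition nY' x := match x with None => NY' | Some j => NYi' j end.
Definition nZ x := match x with None => NZ | Some j => NZi j end.

Fixpoint trd (p : bool) (i : nat) d : ptree :=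
  Node (if p then NP' i else NP i) (Leaf (TA i) ::
    match d with
    | DEps => [::]
    | DE e => [:: tre None e]
    | DStar j => [:: Leaf (TA j); Leaf TStar]
    | DStarE j e => [:: Leaf (TA j); Leaf TStar; tre (Some j) e]
    end)
with tre x e :=
  match e with EN b l =>
    if b then
      (if single l then Node (nE x) [:: Leaf TL; Leaf TEps; Leaf TPlus; Node (nY' x) (trl true l); Leaf TR]
       else Node (nE x) [:: Leaf TL; Leaf TEps; Leaf TPlus; Node (nZ x) (trl true l); Leaf TR])
    else
      (if single l then Node (nE x) [:: Node (nY x) (trl false l)]
       else Node (nE x) [:: Leaf TL; Node (nZ x) (trl true l); Leaf TR])
  end
with trl p l :=
  match l with PNil => [::]
  | PCons i d l' => trd p i d :: match l' with PNil => [::] | _ => Leaf TPlus :: trl p l' end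
  end.

Definition trS e := match e with EN _ l =>
  if single l then Node NS [:: Node NY (trl false l)] else Node NS [:: Node NZ (trl true l)] end.

Definition yl ts := flatten (map yield ts).
Lemma yl_cons t ts : yl (t :: ts) = yield t ++ yl ts. Proof. by []. Qed.
Lemma yl_nil : yl [::] = [::]. Proof. by []. Qed.
Lemma yield_node A ts : yield (Node A ts) = yl ts.
Proof. by elim: ts => //= t ts; rewrite /yl /flatten /= => ->. Qed.
Lemma yield_leaf a : yield (Leaf a) = [:: a]. Proof. by []. Qed.

Lemma trd_eq p i d : trd p i d = Node (if p then NP' i else NP i) (Leaf (TA i) ::
    match d with
    | DEps => [::]
    | DE e => [:: tre None e]
    | DStar j => [:: Leaf (TA j); Leaf TStar]
    | DStarE j e => [:: Leaf (TA j); Leaf TStar; tre (Some j) e]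
    end).
Proof. by case: d. Qed.
Lemma tre_eq x b l : tre x (EN b l) =
    if b then
      (if single l then Node (nE x) [:: Leaf TL; Leaf TEps; Leaf TPlus; Node (nY' x) (trl true l); Leaf TR]
       else Node (nE x) [:: Leaf TL; Leaf TEps; Leaf TPlus; Node (nZ x) (trl true l); Leaf TR])
    else
      (if single l then Node (nE x) [:: Node (nY x) (trl false l)]
       else Node (nE x) [:: Leaf TL; Node (nZ x) (trl true l); Leaf TR]).
Proof. by []. Qed.
Lemma trl_cons p i d l' : trl p (PCons i d l') =
  trd p i d :: match l' with PNil => [::] | _ => Leaf TPlus :: trl p l' end.
Proof. by []. Qed.

Lemma yield_all :
  (forall d p i, yield (trd p i d) = TA i :: prd d) /\
  (forall e x, yield (tre x e) = pre e) /\
  (forall l p, yl (trl p l) = prl l).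
Proof.
apply: ast_mind.
- by move=> p i; rewrite trd_eq yield_node.
- by move=> e IH p i; rewrite trd_eq yield_node !yl_cons yl_nil IH cats0.
- by move=> j p i; rewrite trd_eq yield_node.
- by move=> j e IH p i; rewrite trd_eq yield_node !yl_cons yl_nil IH cats0.
- move=> b l IH x; rewrite tre_eq.
  case: b; case Hs: (single l); rewrite yield_node !yl_cons yl_nil ?yield_node ?yield_leaf IH /= ?Hs ?cats0 //.
- by move=> p.
- move=> i d IHd l IHl p; rewrite trl_cons yl_cons IHd.
  case: l IHl => [|j d' l'] IHl; first by rewrite yl_nil /= cats0.
  by rewrite yl_cons yield_leaf IHl.
Qed.

Lemma yield_trS e : yield (trS e) = prS e.
Proof.
have [_ [_ H]] := yield_all.
case: e => b l; rewrite /trS; case: (single l); 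
  by rewrite yield_node yl_cons yl_nil yield_node H cats0.
Qed.

Fixpoint allv k ts := match ts with [::] => True | t :: ts' => valid k t /\ allv k ts' end.

Lemma valid_node k A ts : valid k (Node A ts) <-> prod k A (map root ts) /\ allv k ts.
Proof.
rewrite /=; split; case=> H1 H2; split => //; move: H2; clear H1;
  elim: ts => [|t ts IH] //= [h1 h2]; split => //; exact: IH.
Qed.

Fixpoint tsz t := match t with Leaf _ => 1 | Node _ ts => (sumn (map tsz ts)).+1 end.

Lemma root_T t a : root t = T a -> t = Leaf a.
Proof. by case: t => //= b [->]. Qed.

Lemma root_N t A : root t = N A -> exists ts, t = Node A ts.
Proof. by case: t => //= B ts [->]; exists ts. Qed.

Fixpoint inT (t : ptree) ts := match ts with [::] => False | t' :: ts' => t = t' \/ inT t ts' end.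

Lemma inT_sz t A ts : inT t ts -> tsz t < tsz (Node A ts).
Proof. elim: ts => //= t' ts IH [->|/IH /=]; lia. Qed.

Lemma allv_in k t ts : allv k ts -> inT t ts -> valid k t.
Proof. elim: ts => //= t' ts IH [h1 h2] [->|/IH]; auto. Qed.

Lemma zlist k ns : forall ts,
  (forall t n, inT t ts -> root t = N (NP' n) -> exists d, wfd k true n d /\ t = trd true n d) ->
  map root ts = sep_plus (map (fun n => N (NP' n)) ns) -> ns <> [::] ->
  exists l, letters l = ns /\ wfl k true l /\ ts = trl true l.
Proof.
elim: ns => [|n ns IH] // ts H.
case: ns IH => [|n' ns] IH /=.
- case: ts H => [|t [|t' ts]] //= H [E] _.
  have [d [Hd ->]] := H t n (or_introl erefl) E.
  by exists (PCons n d PNil).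
- case: ts H => [|t [|t2 ts]] //= H [E E2 E3] _.
  have [d [Hd ->]] := H t n (or_introl erefl) E.
  have -> := root_T E2.
  have [l [El [Wl ->]]] : exists l, letters l = n' :: ns /\ wfl k true l /\ ts = trl true l.
    apply: IH => //. by move=> t0 n0 I0; apply: H; right; right.
  exists (PCons n d l); split; first by rewrite /= El.
  split => //. rewrite trl_cons. by case: l El Wl.
Qed.

Definition XP k t := forall i, root t = N (NP i) -> exists d, i < k /\ wfd k false i d /\ t = trd false i d.
Definition XP' k t := forall i, root t = N (NP' i) -> exists d, i < k /\ wfd k true i d /\ t = trd true i d.
Definition XE k t := root t = N NE -> exists e, wfe k None e /\ t = tre None e.
Definition XEi k t := forall j, root t = N (NEi j) -> exists e, wfe k (Some j) e /\ t = tre (Some j) e.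
Definition XS k t := root t = N NS -> exists l, wfe k None (EN false l) /\ t = trS (EN false l).

Lemma wfe_single k x b i d : i < k -> (forall j, x = Some j -> i <> j) -> wfd k b i d ->
  wfe k x (EN b (PCons i d PNil)).
Proof.
move=> hi hx hd /=; split => //; split => //; split; first by rewrite hi.
split; last by rewrite orbF.
move=> j /hx; rewrite inE; case: eqP => // ->. done.
Qed.

Lemma wfe_multi k x b l : 1 < size (letters l) -> sorted ltn (letters l) ->
  all (fun n => n < k) (letters l) -> (forall j, x = Some j -> j \notin letters l) ->
  wfl k true l -> wfe k x (EN b l).
Proof. move=> h1 h2 h3 h4 h5 /=; split; first lia. do 3 (split => //). by rewrite h1 orbT. Qed.

Ltac dmap := repeat match goal with
  | H : _ :: _ = map root _ |- _ => symmetry in H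
  | H : [::] = map root _ |- _ => symmetry in H
  | H : map root ?ts = [::] |- _ => destruct ts; [clear H | discriminate H]
  | H : map root ?ts = _ :: _ |- _ =>
      let t := fresh "t" in let ts' := fresh "ts" in
      let E := fresh "E" in let H' := fresh "H" in
      destruct ts as [|t ts']; [discriminate H| simpl in H; injection H as E H']
  end.

Ltac dleaf := repeat match goal with H : root ?t = T ?a |- _ => apply root_T in H; subst t end.

Lemma inv_Pp k p i rhs : prod k (if p then NP' i else NP i) rhs -> i < k /\
  (rhs = [:: T (TA i)] \/ rhs = [:: T (TA i); N NE] \/
   (exists j, j < k /\ (p -> j <> i) /\ rhs = [:: T (TA i); T (TA j); T TStar]) \/
   (exists j, j < k /\ (p -> j <> i) /\ rhs = [:: T (TA i); T (TA j); T TStar; N (NEi j)])).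
Proof.
case: p => H; inversion H; subst; split => //.
- match goal with hne : is_true (_ != ?j), hd : _ \/ _ |- _ =>
    have ne : j <> i by move=> E; subst; rewrite eqxx in hne
  end.
  match goal with hd : _ \/ _ |- _ =>
    case: hd => [->|[->|[->|->]]]; [left|right;left|right;right;left|right;right;right] => //;
    by exists j end.
- match goal with hd : prodP _ _ _ |- _ =>
  case: hd => *; [left|right;left|right;right;left|right;right;right] => //; by eexists; eauto end.
Qed.

Lemma inv_Ex k x rhs : prod k (nE x) rhs -> (forall j, x = Some j -> j < k) /\
  (rhs = [:: N (nY x)] \/ rhs = [:: T TL; N (nZ x); T TR] \/
   rhs = [:: T TL; T TEps; T TPlus; N (nY' x); T TR] \/
   rhs = [:: T TL; T TEps; T TPlus; N (nZ x); T TR]).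
Proof.
case: x => [j|] H; inversion H; subst; (split; first by move=> ? [E]; subst);
  (by left) || (by right; left) || (by right; right; left) || (by right; right; right).
Qed.

Lemma inv_Yx k x rhs : prod k (nY x) rhs ->
  exists i, i < k /\ (forall j, x = Some j -> i <> j) /\ rhs = [:: N (NP i)].
Proof.
case: x => [j|] H; inversion H; subst; exists j0 || exists i; split => //; split => //.
move=> j' [<-] E; subst; match goal with hne : is_true (?a != ?a) |- _ => by rewrite eqxx in hne end.
Qed.

Lemma inv_Y'x k x rhs : prod k (nY' x) rhs ->
  exists i, i < k /\ (forall j, x = Some j -> i <> j) /\ rhs = [:: N (NP' i)].
Proof.
case: x => [j|] H; inversion H; subst; exists j0 || exists i; split => //; split => //.
move=> j' [<-] E; subst; match goal with hne : is_true (?a != ?a) |- _ => by rewrite eqxx in hne end.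
Qed.

Lemma inv_Zx k x rhs : prod k (nZ x) rhs ->
  exists ns, 2 <= size ns /\ sorted ltn ns /\ all (fun n => n < k) ns /\
    (forall j, x = Some j -> j \notin ns) /\ rhs = sep_plus (map (fun n => N (NP' n)) ns).
Proof.
case: x => [j|] H; inversion H; subst; exists ns; do 4 (split => //).
by move=> j' [<-].
Qed.

Lemma inv_S k rhs : prod k NS rhs -> rhs = [:: N NY] \/ rhs = [:: N NZ].
Proof. move=> H; inversion H; subst; auto. Qed.

Lemma mr1 ts a : map root ts = [:: a] -> exists t1, ts = [:: t1] /\ root t1 = a.
Proof. by case: ts => [|t1 [|t2 ts]] //= [E]; exists t1. Qed.
Lemma mr2 ts a b : map root ts = [:: a; b] -> exists t1 t2, ts = [:: t1; t2] /\ root t1 = a /\ root t2 = b.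
Proof. by case: ts => [|t1 [|t2 [|t3 ts]]] //= [E1 E2]; exists t1, t2. Qed.
Lemma mr3 ts a b c : map root ts = [:: a; b; c] -> exists t1 t2 t3, ts = [:: t1; t2; t3] /\
  root t1 = a /\ root t2 = b /\ root t3 = c.
Proof. by case: ts => [|t1 [|t2 [|t3 [|t4 ts]]]] //= [E1 E2 E3]; exists t1, t2, t3. Qed.
Lemma mr4 ts a b c d : map root ts = [:: a; b; c; d] -> exists t1 t2 t3 t4, ts = [:: t1; t2; t3; t4] /\
  root t1 = a /\ root t2 = b /\ root t3 = c /\ root t4 = d.
Proof. by case: ts => [|t1 [|t2 [|t3 [|t4 [|t5 ts]]]]] //= [E1 E2 E3 E4]; exists t1, t2, t3, t4. Qed.
Lemma mr5 ts a b c d e : map root ts = [:: a; b; c; d; e] -> exists t1 t2 t3 t4 t5,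
  ts = [:: t1; t2; t3; t4; t5] /\
  root t1 = a /\ root t2 = b /\ root t3 = c /\ root t4 = d /\ root t5 = e.
Proof. by case: ts => [|t1 [|t2 [|t3 [|t4 [|t5 [|t6 ts]]]]]] //= [E1 E2 E3 E4 E5]; exists t1, t2, t3, t4, t5. Qed.

Definition Concl k t :=
  (forall p i, root t = N (if p then NP' i else NP i) -> exists d, i < k /\ wfd k p i d /\ t = trd p i d) /\
  (forall x, root t = N (nE x) -> exists e, wfe k x e /\ t = tre x e) /\
  (root t = N NS -> exists l, wfe k None (EN false l) /\ t = trS (EN false l)).

Lemma single_false l : 1 < size (letters l) -> single l = false.
Proof. by case: l => // i d [] //. Qed.

Lemma extract k n : forall t, tsz t < n -> valid k t -> Concl k t.
Proof.
elim: n => [|n IH] // [a|A ts] Hs Hv.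
  by split; [move=> ? ? |split; [move=> ?|]].
have [Hp Hall] := (valid_node k A ts).1 Hv.
have IHc : forall t, inT t ts -> Concl k t.
  move=> t I; apply: IH; last exact: (allv_in Hall I).
  have := inT_sz A I; move: Hs => /=; lia.
have IHg : forall t1 B ts1, inT t1 ts -> t1 = Node B ts1 ->
    prod k B (map root ts1) /\ (forall t', inT t' ts1 -> Concl k t').
  move=> t1 B ts1 I E; have V := allv_in Hall I; rewrite E in V.
  have [Hp1 Hall1] := (valid_node k B ts1).1 V; split => // t' I'.
  apply: IH; last exact: (allv_in Hall1 I').
  have := inT_sz B I'; have := inT_sz A I; rewrite -E; move: Hs => /=; lia.
have Zl : forall t1 B ts1, inT t1 ts -> t1 = Node B ts1 ->
    forall ns, map root ts1 = sep_plus (map (fun n => N (NP' n)) ns) -> ns <> [::] ->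
    exists l, letters l = ns /\ wfl k true l /\ ts1 = trl true l.
  move=> t1 B ts1 I E ns H ne; have [_ IH1] := IHg _ _ _ I E.
  apply: zlist H ne => t n0 I0 E0.
  have [d [_ [Hd ->]]] := (IH1 t I0).1 true n0 E0. by exists d.
have Yl : forall x t1, inT t1 ts -> root t1 = N (nY x) ->
    exists i d, i < k /\ (forall j, x = Some j -> i <> j) /\ wfd k false i d /\
      t1 = Node (nY x) [:: trd false i d].
  move=> x t1 I E; have [ts1 E1] := root_N E.
  have [Hp1 IH1] := IHg _ _ _ I E1.
  have [i [hi [hx H]]] := inv_Yx Hp1.
  have [t' [Et E']] := mr1 H; subst ts1.
  have [d [_ [Hd Ed]]] := (IH1 t' (or_introl erefl)).1 false i E'.
  exists i, d; do 3 (split => //). by rewrite E1 Ed.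
have Y'l : forall x t1, inT t1 ts -> root t1 = N (nY' x) ->
    exists i d, i < k /\ (forall j, x = Some j -> i <> j) /\ wfd k true i d /\
      t1 = Node (nY' x) [:: trd true i d].
  move=> x t1 I E; have [ts1 E1] := root_N E.
  have [Hp1 IH1] := IHg _ _ _ I E1.
  have [i [hi [hx H]]] := inv_Y'x Hp1.
  have [t' [Et E']] := mr1 H; subst ts1.
  have [d [_ [Hd Ed]]] := (IH1 t' (or_introl erefl)).1 true i E'.
  exists i, d; do 3 (split => //). by rewrite E1 Ed.
have Zx : forall x t1, inT t1 ts -> root t1 = N (nZ x) ->
    exists l, 1 < size (letters l) /\ sorted ltn (letters l) /\ all (fun n => n < k) (letters l) /\
      (forall j, x = Some j -> j \notin letters l) /\ wfl k true l /\ t1 = Node (nZ x) (trl true l).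
  move=> x t1 I E; have [ts1 E1] := root_N E.
  have [Hp1 _] := IHg _ _ _ I E1.
  have [ns [h1 [h2 [h3 [h4 H]]]]] := inv_Zx Hp1.
  have [l [El [Wl Et]]] := Zl _ _ _ I E1 ns H ltac:(by case: ns h1 {H h2 h3 h4}).
  exists l; rewrite El; do 5 (split => //). by rewrite E1 Et.
split; [|split].
- move=> p i [EA]; subst A.
  have [hi H] := inv_Pp Hp.
  case: H => [H|[H|[[j [hj [hpj H]]]|[j [hj [hpj H]]]]]].
  + have [t1 [E E1]] := mr1 H; subst ts; rewrite (root_T E1).
    by exists DEps.
  + have [t1 [t2 [E [E1 E2]]]] := mr2 H; subst ts; rewrite (root_T E1).
    have [e [We ->]] := (IHc t2 (or_intror (or_introl erefl))).2.1 None E2.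
    by exists (DE e).
  + have [t1 [t2 [t3 [E [E1 [E2 E3]]]]]] := mr3 H; subst ts.
    rewrite (root_T E1) (root_T E2) (root_T E3).
    by exists (DStar j).
  + have [t1 [t2 [t3 [t4 [E [E1 [E2 [E3 E4]]]]]]]] := mr4 H; subst ts.
    rewrite (root_T E1) (root_T E2) (root_T E3).
    have [e [We ->]] := (IHc t4 ltac:(by right; right; right; left)).2.1 (Some j) E4.
    by exists (DStarE j e).
- move=> x [EA]; subst A.
  have [hx H] := inv_Ex Hp.
  case: H => [H|[H|[H|H]]].
  + have [t1 [E E1]] := mr1 H; subst ts.
    have [i [d [hi [hxi [Hd ->]]]]] := Yl x t1 (or_introl erefl) E1.
    exists (EN false (PCons i d PNil)); split => //. exact: wfe_single.
  + have [t1 [t2 [t3 [E [E1 [E2 E3]]]]]] := mr3 H; subst ts.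
    rewrite (root_T E1) (root_T E3).
    have [l [h1 [h2 [h3 [h4 [Wl ->]]]]]] := Zx x t2 ltac:(by right; left) E2.
    exists (EN false l); split; first exact: wfe_multi.
    by rewrite tre_eq single_false.
  + have [t1 [t2 [t3 [t4 [t5 [E [E1 [E2 [E3 [E4 E5]]]]]]]]]] := mr5 H; subst ts.
    rewrite (root_T E1) (root_T E2) (root_T E3) (root_T E5).
    have [i [d [hi [hxi [Hd ->]]]]] := Y'l x t4 ltac:(by right; right; right; left) E4.
    exists (EN true (PCons i d PNil)); split => //. exact: wfe_single.
  + have [t1 [t2 [t3 [t4 [t5 [E [E1 [E2 [E3 [E4 E5]]]]]]]]]] := mr5 H; subst ts.
    rewrite (root_T E1) (root_T E2) (root_T E3) (root_T E5).
    have [l [h1 [h2 [h3 [h4 [Wl ->]]]]]] := Zx x t4 ltac:(by right; right; right; left) E4.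
    exists (EN true l); split; first exact: wfe_multi.
    by rewrite tre_eq single_false.
- move=> [EA]; subst A.
  case: (inv_S Hp) => H.
  + have [t1 [E E1]] := mr1 H; subst ts.
    have [i [d [hi [hxi [Hd ->]]]]] := Yl None t1 (or_introl erefl) E1.
    exists (PCons i d PNil); split => //. exact: wfe_single.
  + have [t1 [E E1]] := mr1 H; subst ts.
    have [l [h1 [h2 [h3 [h4 [Wl ->]]]]]] := Zx None t1 (or_introl erefl) E1.
    exists l; split; first exact: wfe_multi.
    by rewrite /trS single_false.
Qed.


Lemma canon k t s : parse_tree k t s -> exists l r, wfe k None (EN false l) /\
  t = trS (EN false l) /\ s = prl l /\ readU k s r /\ denot r (seml l).
Proof.
move=> [V [R Y]].
have [_ [_ X]] := extract (ltnSn (tsz t)) V.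
have [l [W Et]] := X R.
have [_ [_ RD]] := rd_all k.
have W' := W; case: W' => [hs [_ [hk [_ hw]]]].
have lne : l <> PNil by case: l hs {W Et hk hw}.
have [r [Hr [Dr _]]] := RD l _ hw hk lne.
have Es : s = prl l by rewrite -Y Et yield_trS.
exists l, r; do 2 (split => //); split => //; split => //; by rewrite Es.
Qed.

Lemma same_l k l1 l2 : wfe k None (EN false l1) -> wfe k None (EN false l2) ->
  semeq (seml l1) (seml l2) -> l1 = l2.
Proof.
move=> W1 W2 E.
have : DE (EN false l1) = DE (EN false l2).
  apply: (inj_all (n := (szd (DE (EN false l1)) + szd (DE (EN false l2))).+1)) => //.
  - by exists false, 0; exact: W1.
  - by exists false, 0; exact: W2.
  move=> w /=; by rewrite E.
by case.
Qed.

Unset Implicit Arguments.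
Theorem mainTheorem3 (k : nat) (hk : 1 <= k) :
  unambiguous k /\
  (forall s, generated k s -> exists r, reads k s r) /\
  (forall s1 s2 r1 r2, generated k s1 -> generated k s2 -> s1 <> s2 ->
     reads k s1 r1 -> reads k s2 r2 ->
     ~ (forall w, rmem r1 w <-> rmem r2 w)).
Proof.
split; [|split].
- move=> s _ t1 t2 P1 P2.
  have [l1 [r1 [W1 [-> [E1 [R1 D1]]]]]] := canon P1.
  have [l2 [r2 [W2 [-> [E2 [R2 D2]]]]]] := canon P2.
  have Q := read_uniq R1 R2.
  suff -> : l1 = l2 by [].
  apply: same_l W1 W2 _ => w; by rewrite -D1 -D2.
- move=> s [t P]; have [l [r [_ [_ [_ [R _]]]]]] := canon P. by exists r.
- move=> s1 s2 r1 r2 [t1 P1] [t2 P2] ne H1 H2 Q.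
  have [l1 [q1 [W1 [_ [E1 [R1 D1]]]]]] := canon P1.
  have [l2 [q2 [W2 [_ [E2 [R2 D2]]]]]] := canon P2.
  have Q1 := read_uniq H1 R1; have Q2 := read_uniq H2 R2.
  apply: ne; rewrite E1 E2; congr prl.
  apply: same_l W1 W2 _ => w; by rewrite -D1 -D2 -Q1 -Q2.
Qed.
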